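(* For every message $M$ and formula $\phi$: $\vdash\langle M\rangle\phi\leftrightarrow\neg\neg[M]\phi$.
   Context: Fix a finite set $\mathcal{A}$ of agent names containing a distinguished name $\mathsf{CM}$. Messages: $M ::= a \mid B \mid (M,M)$ ($a\in\mathcal{A}$, $B$ optional data constants, pairs). $\mathcal{P}$ is a denumerable set of propositional variables containing atoms $\mathsf{k}_a(M)$ (''$a$ knows $M$''). Formulas: $\phi ::= P \mid \phi\wedge\phi \mid \phi\vee\phi \mid \neg\phi \mid \phi\to\phi \mid [M]\phi$. Abbreviations: $\mathrm{true}:=\mathsf{k}_{\mathsf{CM}}(\mathsf{CM})$, $\mathrm{false}:=\neg\mathrm{true}$, $\phi\leftrightarrow\psi:=(\phi\to\psi)\wedge(\psi\to\phi)$, $\langle M\rangle\phi:=\neg\neg(\mathsf{k}_{\mathsf{CM}}(M)\wedge\phi)$. LIiP is the smallest set of formulas containing all instances of: the axioms of an adequate Hilbert axiomatization of intuitionistic propositional logic; $\mathsf{k}_a(a)$; $(\mathsf{k}_a(M)\wedge\mathsf{k}_a(M'))\leftrightarrow\mathsf{k}_a((M,M'))$; $[M]\mathsf{k}_{\mathsf{CM}}(M)$; $[M](\phi\to\psi)\to([M]\phi\to[M]\psi)$; $[M]\phi\to(\mathsf{k}_{\mathsf{CM}}(M)\to\phi)$; $[M]\phi\to\langle M\rangle\phi$; $\phi\to[M]\phi$; and closed under modus ponens and the rule: if $\mathsf{k}_{\mathsf{CM}}(M)\to\mathsf{k}_{\mathsf{CM}}(M')$ is in the set then so is $[M']\phi\to[M]\phi$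 for every $\phi$. Write $\vdash\phi$ for $\phi\in\mathrm{LIiP}$. *)

(* Defs.v *)
From mathcomp Require Import all_boot.
Set Implicit Arguments.
Unset Strict Implicit.

Section LIiP.
(* A : agent names, CM : distinguished agent, D : data constants *)
Variables (A : Type) (CM : A) (D : Type).

Inductive msg : Type :=
  | MAgent : A -> msg
  | MData : D -> msg
  | MPair : msg -> msg -> msg.

(* Propositional variables: the atoms k_a(M), plus a denumerable supply of
   further variables. *)
Inductive pvar : Type :=
  | PK : A -> msg -> pvar
  | POther : nat -> pvar.

Inductive form : Type :=
  | FVar : pvar -> form
  | FAnd : form -> form -> form
  | FOr : form -> form -> form
  | FNot : form -> form
  | FImp : form -> form -> form
  | FBox : msg -> form -> form.

Definition fK (a : A) (M : msg) : form := FVar (PK a M).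
Definition ftrue : form := fK CM (MAgent CM).
Definition ffalse : form := FNot ftrue.
Definition fIff (p q : form) : form := FAnd (FImp p q) (FImp q p).
Definition fDia (M : msg) (p : form) : form :=
  FNot (FNot (FAnd (fK CM M) p)).

(* LIiP.  Intuitionistic propositional part: Kleene's Hilbert system for
   intuitionistic propositional logic (with primitive negation). *)
Inductive prov : form -> Prop :=
  | ax_K p q : prov (FImp p (FImp q p))
  | ax_S p q r :
      prov (FImp (FImp p (FImp q r)) (FImp (FImp p q) (FImp p r)))
  | ax_andE1 p q : prov (FImp (FAnd p q) p)
  | ax_andE2 p q : prov (FImp (FAnd p q) q)
  | ax_andI p q : prov (FImp p (FImp q (FAnd p q)))
  | ax_orI1 p q : prov (FImp p (FOr p q))
  | ax_orI2 p q : prov (FImp q (FOr p q))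
  | ax_orE p q r :
      prov (FImp (FImp p r) (FImp (FImp q r) (FImp (FOr p q) r)))
  | ax_notI p q : prov (FImp (FImp p q) (FImp (FImp p (FNot q)) (FNot p)))
  | ax_notE p q : prov (FImp (FNot p) (FImp p q))
  | ax_kself a : prov (fK a (MAgent a))
  | ax_kpair a M M' :
      prov (fIff (FAnd (fK a M) (fK a M')) (fK a (MPair M M')))
  | ax_boxK0 M : prov (FBox M (fK CM M))
  | ax_boxK M p q :
      prov (FImp (FBox M (FImp p q)) (FImp (FBox M p) (FBox M q)))
  | ax_boxT M p : prov (FImp (FBox M p) (FImp (fK CM M) p))
  | ax_boxDia M p : prov (FImp (FBox M p) (fDia M p))
  | ax_pers M p : prov (FImp p (FBox M p))
  | r_mp p q : prov (FImp p q) -> prov p -> prov q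
  | r_mono M M' p :
      prov (FImp (fK CM M) (fK CM M')) -> prov (FImp (FBox M' p) (FBox M p)).

End LIiP.

(* Main.v *)
Require Import Defs.
From mathcomp Require Import all_boot.
From Stdlib Require Lists.List.

Section Der.
Variables (A : Type) (CM : A) (D : Type).
Local Notation F := (form A D).
Local Notation prov := (@prov A CM D).

Inductive der (G : list F) : F -> Prop :=
| dhyp p : Stdlib.Lists.List.In p G -> der G p
| dax p : prov p -> der G p
| dmp p q : der G (FImp p q) -> der G p -> der G q.

Lemma der_nil p : der nil p -> prov p.
Proof. intro H; induction H as [p H|p H|p q _ IH1 _ IH2]; [destruct H| exact H | exact (r_mp IH1 IH2)]. Qed.

Lemma prov_I p : prov (FImp p p).
Proof.
  exact (r_mp (r_mp (ax_S CM p (FImp p p) p) (ax_K CM p (FImp p p))) (ax_K CM p p)).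
Qed.

Lemma deduct G p q : der (p :: G) q -> der G (FImp p q).
Proof.
  intro H; induction H as [r H|r H|r s _ IH1 _ IH2].
  - destruct H as [<-|H]. apply dax, prov_I.
    eapply dmp. apply dax, ax_K. apply dhyp, H.
  - eapply dmp. apply dax, ax_K. apply dax, H.
  - eapply dmp. eapply dmp. apply dax, ax_S. exact IH1. exact IH2.
Qed.

Lemma weaken G G' p : der G p -> (forall x, Stdlib.Lists.List.In x G -> Stdlib.Lists.List.In x G') -> der G' p.
Proof.
  intros H Hi; induction H. apply dhyp, Hi, H. apply dax, H. eapply dmp; eauto.
Qed.

Lemma wk1 G a p : der G p -> der (a :: G) p.
Proof. intro H; eapply weaken; [exact H| simpl; auto]. Qed.

Lemma neg_intro G p q : der (p :: G) q -> der (p :: G) (FNot q) -> der G (FNot p).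
Proof.
  intros H1 H2. eapply dmp. eapply dmp. apply dax, ax_notI.
  apply deduct, H1. apply deduct, H2.
Qed.

Lemma hyp0 G p : der (p :: G) p.
Proof. apply dhyp; simpl; auto. Qed.

Lemma nn_mono G a b : der G (FImp a b) -> der G (FImp (FNot (FNot a)) (FNot (FNot b))).
Proof.
  intro H. apply deduct. apply (neg_intro _ _ (FNot a)).
  - apply (neg_intro _ _ (b)).
    + eapply dmp. apply wk1, wk1, wk1, H. apply hyp0.
    + apply wk1, hyp0.
  - apply wk1, hyp0.
Qed.

Lemma dn_intro G y : der G (FImp y (FNot (FNot y))).
Proof.
  apply deduct. apply (neg_intro _ _ (y)). apply wk1, hyp0. apply hyp0.
Qed.

Lemma tn G y : der G (FImp (FNot (FNot (FNot y))) (FNot y)).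
Proof.
  apply deduct. apply (neg_intro _ _ (FNot (FNot y))).
  eapply dmp. apply dn_intro. apply hyp0. apply wk1, hyp0.
Qed.

Lemma comp G a b c : der G (FImp a b) -> der G (FImp b c) -> der G (FImp a c).
Proof.
  intros H1 H2. apply deduct. eapply dmp. apply wk1, H2.
  eapply dmp. apply wk1, H1. apply hyp0.
Qed.
End Der.

Theorem theorem2p58 (A : finType) (CM : A) (D : Type)
    (M : msg A D) (phi : form A D) :
  prov CM (fIff (fDia CM M phi) (FNot (FNot (FBox M phi)))).
Proof.
  apply der_nil. unfold fIff, fDia.
  eapply dmp. eapply dmp. apply dax, ax_andI.
  - apply nn_mono. eapply comp. apply dax, ax_andE2. apply dax, ax_pers.
  - eapply comp. apply nn_mono. apply dax, ax_boxDia. unfold fDia. apply tn.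
Qed.
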